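(* For every prime $p$, there exist a conic $Q\subset\mathbb P^2$ defined over $\mathbb F_{p^2}$ and a point $t\in C\cap Q$ (over $\overline{\mathbb F}_p$) such that $[\mathbb F_{p^2}(t):\mathbb F_{p^2}]=2(p+1)$.
   Context: $C\subset\mathbb P^2$ is the Fermat curve $X_1^{p+1}+X_2^{p+1}+X_3^{p+1}=0$. Conics include degenerate ones (zero loci of nonzero homogeneous quadratic forms over $\mathbb F_{p^2}$). $\mathbb F_{p^2}(t)$ is the field generated over $\mathbb F_{p^2}$ by the ratios of coordinates of $t$. *)

(* Defs.v *)
From HB Require Import structures.
From mathcomp Require Import all_boot all_order all_algebra all_field.
Set Implicit Arguments. Unset Strict Implicit. Unset Printing Implicit Defensive.
Import GRing.Theory.
Local Open Scope ring_scope.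

(* A point of P^2 over an extension field L is represented by homogeneous
   coordinates x : 'I_3 -> L, not all zero. *)
Definition nonzero_coords (L : fieldType) (x : 'I_3 -> L) : Prop :=
  exists i, x i != 0.

Definition on_fermat (L : fieldType) (p : nat) (x : 'I_3 -> L) : Prop :=
  \sum_(i < 3) x i ^+ p.+1 = 0.

(* A quadratic form over F in X1,X2,X3, given by its coefficients
   c i j for i <= j (the entries with i > j are ignored):
   Q = \sum_{i <= j} c_ij X_i X_j.  Conics (including degenerate ones) are zero loci of such. *)
Definition nonzero_qform (F : fieldType) (c : 'M[F]_3) : Prop :=
  exists i j : 'I_3, (i <= j)%N /\ c i j != 0.

Definition on_conic (F : fieldType) (L : fieldExtType F) (c : 'M[F]_3)
    (x : 'I_3 -> L) : Prop :=
  \sum_(i < 3) \sum_(j < 3 | (i <= j)%N) (c i j)%:A * x i * x j = 0.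

Definition coord_ratios (L : fieldType) (x : 'I_3 -> L) : seq L :=
  [seq x i / x j | i <- enum 'I_3, j <- [seq j <- enum 'I_3 | x j != 0]].

(* Degree over F of the field F(t) generated by the coordinate ratios of t. *)
Definition ratio_field_degree (F : fieldType) (L : fieldExtType F)
    (x : 'I_3 -> L) : nat :=
  \dim <<1%VS & coord_ratios x>>%VS.

(* Main.v *)
Require Import Defs.
From HB Require Import structures.
From mathcomp Require Import all_boot all_order all_algebra all_field.
From mathcomp Require Import all_fingroup cyclic ring zify.
Set Implicit Arguments. Unset Strict Implicit. Unset Printing Implicit Defensive.
Import GRing.Theory.

Section W.
Local Open Scope ring_scope.

Lemma exists_w2 (F : finFieldType) (hF : #|F| = 4%N) (ch2 : (2%:R : F) = 0) :
  exists w : F, [/\ w != 0, (forall j, (w ^+ 1) ^+ j = 1 -> (3 %| j)%N)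
    & forall r : F, r ^+ 2 - (w - 2%:R) * r + 1 != 0].
Proof.
have [w Hw] : exists w : F, w \notin [:: 0; 1].
  apply/existsP; apply: contraT; rewrite negb_exists => /forallP H.
  pose l : seq F := [:: 0; 1].
  have : (#|F| <= #|l|)%N.
    apply: subset_leq_card; apply/subsetP => z _.
    by have := H z; rewrite negbK.
  rewrite hF => /leq_trans/(_ (card_size _)) //.
move: Hw; rewrite !inE negb_or => /andP[w0 w1].
have w4 : w ^+ 4 = w by rewrite -hF expf_card.
have w3 : w ^+ 3 = 1.
  apply: (mulIf w0); rewrite mul1r -exprSr; exact: w4.
have wA : w ^+ 2 + w + 1 = 0.
  have : (w - 1) * (w ^+ 2 + w + 1) = 0.
    by rewrite -[RHS](subrr 1) -{3}w3; ring.
  by move/eqP; rewrite mulf_eq0 subr_eq0 (negbTE w1) /= => /eqP.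
exists w; split => //.
  move=> j; rewrite expr1 => Hj.
  have : w ^+ (j %% 3) = 1.
    by rewrite -Hj {2}(divn_eq j 3) exprD mulnC exprM w3 expr1n mul1r.
  rewrite /dvdn; have : (j %% 3 < 3)%N by rewrite ltn_mod.
  case: (j %% 3)%N => [|[|[|//]]] //= _.
    by rewrite expr1 => /eqP; rewrite (negbTE w1).
  move=> w2; exfalso; move/eqP: w1; apply; by rewrite -w3 exprS w2 mulr1.
move=> r; apply/negP => /eqP E.
have r4 : r ^+ 4 = r by rewrite -hF expf_card.
have id : r ^+ 4 - r - w = (r ^+ 2 - (w - 2%:R) * r + 1) *
  (r ^+ 2 + w * r + w ^+ 2 - 1) + r * (w ^+ 3 - 1) - (w ^+ 2 + w + 1) +
  2%:R * (r + 1 - r * w - r ^+ 3 - r ^+ 2 * w - r * w ^+ 2).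
  ring.
move: id; rewrite E w3 wA ch2 r4 subrr !(mul0r, mulr0, subr0, add0r, addr0, sub0r).
by rewrite subrr mulr0 => /eqP; rewrite oppr_eq0 (negbTE w0).
Qed.

Lemma exists_wodd (p : nat) (hp : prime p) (podd : odd p) (F : finFieldType)
  (hF : #|F| = (p ^ 2)%N) :
  exists w : F, [/\ w != 0, (forall j, (w ^+ p.-1) ^+ j = 1 -> (p.+1 %| j)%N)
    & forall r : F, r ^+ 2 - (w - 2%:R) * r + 1 != 0].
Proof.
have chF : p \in [pchar F] := card_finPcharP hF hp.
have p3 : (2 < p)%N := odd_prime_gt2 podd hp.
set q := #|F| in hF *.
have q1 : q.-1 = (p.-1 * p.+1)%N by rewrite hF; nia.
have qgt : (0 < q.-1)%N by rewrite q1; nia.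
have /hasP[g _ Hg] : has q.-1.-primitive_root (enum (predC1 (0 : F))).
  apply: has_prim_root => //.
  - apply/allP => z; rewrite mem_enum /= => z0; rewrite unity_rootE.
    apply/eqP/(mulfI z0); rewrite -exprS prednK ?expf_card ?mulr1 //.
    by rewrite hF expn_gt0 prime_gt0.
  - exact: enum_uniq.
  - by rewrite -cardE cardC1.
have g0 : g != 0.
  apply/negP => /eqP g0; move: (prim_expr_order Hg); rewrite g0 expr0n.
  by case: (q.-1) qgt => // n _ /= /eqP; rewrite eq_sym oner_eq0.
pose isFp (z : F) := z ^+ p = z.
have FpN k : isFp k%:R by rewrite /isFp -(pFrobenius_autE chF) pFrobenius_aut_nat.
have FpB a b : isFp a -> isFp b -> isFp (a - b).
  move=> Ha Hb; rewrite /isFp -(pFrobenius_autE chF) rmorphB /=.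
  by rewrite !pFrobenius_autE Ha Hb.
have FpM a b : isFp a -> isFp b -> isFp (a * b).
  by rewrite /isFp exprMn => -> ->.
have FpV a : isFp a -> isFp a^-1 by rewrite /isFp exprVn => ->.
have FpO a : a != 0 -> isFp a -> a ^+ p.-1 = 1.
  move=> a0 Ha; apply/(mulfI a0); rewrite -exprS prednK ?prime_gt0 //.
  by rewrite Ha mulr1.
have gNFp : ~ isFp g.
  move=> /(FpO _ g0) /eqP; rewrite -(prim_order_dvd Hg) q1 => /dvdn_leq.
  by move=> H; have := H (ltac:(lia)); nia.
have natinj u u' : (u < p)%N -> (u' < p)%N -> u%:R = u'%:R :> F -> u = u'.
  wlog le : u u' / (u <= u')%N.
    move=> IH hu hu' E; case: (leqP u u') => h; first exact: IH.
    by symmetry; apply: IH => //; apply: ltnW.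
  move=> hu hu' /eqP; rewrite eq_sym -subr_eq0 -natrB // -(dvdn_pcharf chF).
  case: (posnP (u' - u)) => [|h]; first by lia.
  by rewrite gtnNdvd //; lia.
have inj2 u v u' v' : (u < p)%N -> (v < p)%N -> (u' < p)%N -> (v' < p)%N ->
    u%:R + v%:R * g = u'%:R + v'%:R * g -> u = u' /\ v = v'.
  move=> hu hv hu' hv' E.
  case: (eqVneq v v') => [ev|nv].
    by split => //; apply: natinj => //; move: E; rewrite ev => /addIr.
  exfalso; apply: gNFp.
  have nb : (v%:R - v'%:R : F) != 0.
    by rewrite subr_eq0; apply/eqP => /natinj; move/(_ hv hv'); apply/eqP.
  have -> : g = (u'%:R - u%:R) / (v%:R - v'%:R).
    apply: (mulIf nb); rewrite divfK //.
    have H : (u%:R + v%:R * g) - (u'%:R + v'%:R * g) = 0 :> F by rewrite E subrr.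
    by apply/eqP; rewrite -subr_eq0 -H; apply/eqP; ring.
  by apply: (FpM); [apply: (FpB)|apply: (FpV); apply: (FpB)].
pose Z := [seq (u%:R + v%:R * g : F) | u <- iota 1 p.-1, v <- iota 0 p].
have memZ z : z \in Z -> exists u v, [/\ (0 < u < p)%N, (v < p)%N & z = u%:R + v%:R * g].
  case/allpairsP => [[u v]] /=; rewrite !mem_iota => -[hu hv ->].
  by exists u, v; split => //; lia.
have Z0 z : z \in Z -> z != 0.
  move=> /memZ [u [v [/andP[hu1 hu2] hv ->]]]; apply/eqP => E.
  have := inj2 u v 0%N 0%N hu2 hv; rewrite !mul0r addr0.
  move=> /(_ ltac:(lia) ltac:(lia) E); lia.
have uZ : uniq Z.
  apply: allpairs_uniq; rewrite ?iota_uniq //.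
  move=> [u v] [u' v'] /allpairsP[[a b] /= [ha hb [-> ->]]]
    /allpairsP[[a' b'] /= [ha' hb' [-> ->]]] /= E.
  move: ha hb ha' hb'; rewrite !mem_iota => /andP[ha1 ha2] /andP[hb1 hb2] /andP[ha1' ha2'] /andP[hb1' hb2'].
  by have [-> ->] := inj2 a b a' b' ltac:(lia) ltac:(lia) ltac:(lia) ltac:(lia) E.
have qodd : odd q by rewrite hF oddX.
pose m := (q.-1)./2.
have m2 : (m.*2 = q.-1)%N.
  have gen n : odd n -> (n.-1./2.*2 = n.-1)%N.
    by case: n => // n /= /negbTE on; rewrite halfK on subn0.
  exact: gen.
have [z Zz nsq] : exists2 z, z \in Z & forall r : F, r ^+ 2 != z.
  case: (boolP (all (fun z => [exists r : F, r ^+ 2 == z]) Z)) => [allsq|].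
    exfalso.
    have := @max_poly_roots _ ('X^m - 1 : {poly F}) Z.
    rewrite size_XnsubC; last by lia.
    have -> : ('X^m - 1 : {poly F}) != 0.
      by rewrite -size_poly_eq0 size_XnsubC //; lia.
    move=> /(_ isT) H.
    have : (size Z < m.+1)%N.
      apply: H uZ; apply/allP => z Zz; rewrite rootE !hornerE.
      have /existsP[r /eqP Er] := allP allsq z Zz.
      have r0 : r != 0 by apply: contraNneq (Z0 z Zz) => r0; rewrite -Er r0 expr0n.
      rewrite -Er -exprM mul2n m2.
      have : r ^+ q.-1 = 1.
        apply/(mulfI r0); rewrite -exprS prednK ?expf_card ?mulr1 //; lia.
      by move=> ->; rewrite subrr.
    rewrite size_allpairs !size_iota; nia.
  rewrite -has_predC => /hasP[z Zz]; rewrite /= negb_exists => /forallP nsq.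
  by exists z.
have sqFp a : a != 0 -> isFp a -> exists r, r ^+ 2 = a.
  move=> a0 Ha.
  have aq : a ^+ q.-1 = 1 by rewrite q1 exprM FpO // expr1n.
  have [[i _] /= Ei] := prim_rootP Hg aq.
  have : (q.-1 %| i * p.-1)%N.
    by rewrite (prim_order_dvd Hg) exprM -Ei FpO.
  rewrite q1 [(i * _)%N]mulnC dvdn_pmul2l; last by lia.
  case/dvdnP => k Ek.
  have p2 : (p.+1 = 2 * (p.+1)./2)%N.
    by rewrite mul2n -[LHS](odd_double_half) /= podd.
  exists (g ^+ (k * (p.+1)./2)); rewrite -exprM Ei Ek; congr (_ ^+ _).
  rewrite {2}p2; lia.
have [u [v [/andP[hu1 hu2] hv Ez]]] := memZ z Zz.
have natn0 k : (0 < k < p)%N -> k%:R != 0 :> F.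
  move=> /andP[k1 k2]; apply/eqP => /(natinj k 0%N k2 ltac:(lia)); lia.
have v0 : (0 < v)%N.
  case: (posnP v) => // v0; exfalso.
  have [r Er] := sqFp (u%:R) (natn0 u ltac:(lia)) (FpN u).
  by move/eqP: (nsq r); apply; rewrite Ez v0 mul0r addr0.
set a : F := u%:R in Ez; set b : F := v%:R in Ez.
have a0 : a != 0 by apply: natn0; lia.
have b0 : b != 0 by apply: natn0; lia.
have four : (4%:R : F) != 0.
  rewrite -(dvdn_pcharf chF); apply/negP => Hd; have p4 := @dvdn_leq p 4 isT Hd.
  have : p = 3%N \/ p = 4%N by lia.
  by case=> Ep; move: Hd podd; rewrite Ep.
pose c : F := - (4%:R) * a / b.
have c0 : c != 0 by rewrite /c !mulf_neq0 ?invr_eq0 ?oppr_eq0.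
have Fpc : isFp c.
  have Fp0 : isFp 0 by rewrite /isFp expr0n; case: (p) p3.
  rewrite /c; apply: (FpM); last by apply: (FpV); apply: (FpN).
  apply: (FpM); last exact: (FpN).
  by rewrite -sub0r; apply: (FpB) => //; apply: (FpN).
pose w := c / g.
have w0 : w != 0 by rewrite /w mulf_neq0 ?invr_eq0.
exists w; split => //.
  move=> j; rewrite /w expr_div_n FpO // mul1r -exprVn -exprM => /eqP.
  rewrite exprVn invr_eq1 -(prim_order_dvd Hg) q1 dvdn_pmul2l //; lia.
move=> r; apply/negP => /eqP E.
have [rho Erho] := sqFp a a0 (FpN u).
pose R := 2%:R * r - (w - 2%:R).
have ER : R ^+ 2 = w ^+ 2 - 4%:R * w.
  have : R ^+ 2 - (w ^+ 2 - 4%:R * w) = 4%:R * (r ^+ 2 - (w - 2%:R) * r + 1).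
    by rewrite /R; ring.
  by rewrite E mulr0 => /eqP; rewrite subr_eq0 => /eqP.
move/eqP: (nsq (R * rho / w)); apply.
rewrite expr_div_n exprMn ER Erho Ez /w /c; field.
by rewrite g0 -/b b0 -/a a0 oppr_eq0 four.
Qed.

Lemma exists_w (p : nat) (hp : prime p) (F : finFieldType)
  (hF : #|F| = (p ^ 2)%N) :
  exists w : F, [/\ w != 0, (forall j, (w ^+ p.-1) ^+ j = 1 -> (p.+1 %| j)%N)
    & forall r : F, r ^+ 2 - (w - 2%:R) * r + 1 != 0].
Proof.
case: (even_prime hp) => [p2|podd]; last exact: exists_wodd.
subst p; apply: exists_w2 => //.
exact: (pcharf0 (card_finPcharP hF hp)).
Qed.
End W.

Section M.
Local Open Scope ring_scope.

Lemma size_XnC (R : nzRingType) (n k : nat) (c : R) :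
  (k < n)%N -> size ('X^n - c%:P * 'X^k + 1 : {poly R}) = n.+1.
Proof.
move=> kn; rewrite -addrA size_polyDl ?size_polyXn //.
apply: leq_ltn_trans (size_polyD _ _) _; rewrite size_polyN size_polyC.
rewrite gtn_max ltnS (leq_trans (size_polyMleq _ _)) //=.
  by case: (1 != 0) => /=; lia.
by rewrite size_polyXn size_polyC; case: (c != 0) => /=; lia.
Qed.

Lemma size_XnC' (R : nzRingType) (n : nat) (c : R) :
  (0 < n)%N -> size ('X^n + c%:P : {poly R}) = n.+1.
Proof.
move=> n0; rewrite size_polyDl ?size_polyXn //.
by apply: leq_ltn_trans (size_polyC_leq1 _) _.
Qed.

Lemma root_split (L0 : fieldType) (Q G : {poly L0}) (rs : seq L0) :
  Q %= \prod_(z <- rs) ('X - z%:P) -> G %| Q -> (1 < size G)%N ->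
  exists z, root G z.
Proof.
move=> HQ; rewrite (eqp_dvdr _ HQ) => HG sG.
case: (dvdp_prod_XsubC HG) => m Hm.
case E: (mask m rs) Hm => [|z zs] Hm.
  by move: (eqp_size Hm); rewrite big_nil size_poly1 => sG1; rewrite sG1 in sG.
by exists z; rewrite (eqp_root Hm) root_prod_XsubC mem_head.
Qed.


Variables (p : nat) (hp : prime p) (F : finFieldType) (hF : #|F| = (p ^ 2)%N).
Variables (w : F) (w0 : w != 0)
  (word : forall j, (w ^+ p.-1) ^+ j = 1 -> (p.+1 %| j)%N)
  (wnr : forall r : F, r ^+ 2 - (w - 2%:R) * r + 1 != 0).

Let tau := w - 2%:R.
Let Y : {poly F} := 'X^(p.+1) + 1.
Let P1 : {poly F} := 'X^(2 * p.+1) - tau%:P * 'X^(p.+1) + 1.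
Let P2 : {poly F} := Y ^+ 2 + tau%:P * Y + 1.

Lemma P0 : P1 * P2 != 0.
Proof.
apply/eqP => /(congr1 (horner^~ 0)); rewrite /P1 /P2 /Y !hornerE /=.
rewrite !expr0n /= !(mul0r, mulr0, subr0, add0r, addr0, mul1r, mulr1) /tau.
move/eqP; apply/negP; rewrite expr1n.
have -> : 1 + (w - 2%:R) + 1 = w by rewrite -addrA addrC -addrA addrC; ring.
by rewrite oppr0 add0r mul1r.
Qed.


Lemma arith1 : ((p ^ 2) * (p ^ 2) = 1 + p.+1 * ((p ^ 2).+1 * p.-1))%N.
Proof. have := prime_gt0 hp; case: p => // n _; rewrite !expnS expn0; nia. Qed.

Lemma arith2 : ((p ^ 2).-1 = p.-1 * p.+1)%N.
Proof. have := prime_gt0 hp; case: p => // n _; rewrite !expnS expn0; nia. Qed.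

Lemma mapXnC (L : fieldExtType F) (n k : nat) (c : F) :
  map_poly (in_alg L) ('X^n - c%:P * 'X^k + 1) = 'X^n - (c%:A)%:P * 'X^k + 1.
Proof. by rewrite rmorphD rmorphB rmorphM /= !map_polyXn map_polyC rmorph1. Qed.

Lemma mapP2gen (L : fieldExtType F) (n : nat) (c : F) :
  map_poly (in_alg L) (('X^n + 1) ^+ 2 + c%:P * ('X^n + 1) + 1) =
  ('X^n + 1) ^+ 2 + (c%:A)%:P * ('X^n + 1) + 1.
Proof.
by rewrite !(rmorphD, rmorphXn, rmorphM, rmorph1) /= map_polyX map_polyC.
Qed.

Lemma main : exists (L : fieldExtType F) (c : 'M[F]_3) (t : 'I_3 -> L),
    [/\ nonzero_qform c, nonzero_coords t, on_fermat p t, on_conic c t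
      & ratio_field_degree t = (2 * p.+1)%N].
Proof.
case: (FinSplittingFieldFor P0) => L [rs Hrs _].
rewrite /= in Hrs.
have mapP1 : map_poly (in_alg L) P1 =
    'X^(2 * p.+1) - (tau%:A)%:P * 'X^(p.+1) + 1 by apply: mapXnC.
have mapP2 : map_poly (in_alg L) P2 =
    ('X^(p.+1) + 1) ^+ 2 + (tau%:A)%:P * ('X^(p.+1) + 1) + 1 by apply: mapP2gen.
have [x Hx] : exists x, root (map_poly (in_alg L) P1) x.
  apply: (root_split Hrs); first by rewrite rmorphM dvdp_mulr.
  by rewrite mapP1 size_XnC //; lia.
rewrite mapP1 rootE !hornerE /= in Hx.
set h := x ^+ p.+1.
have Eh : h ^+ 2 - tau%:A * h + 1 = 0.
  by move/eqP: Hx; rewrite /h -exprM mulnC.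
pose G2 : {poly L} := 'X^(p.+1) + (1 + h)%:P.
have [s Hs] : exists s, root G2 s.
  apply: (root_split Hrs); last by rewrite size_XnC'.
  have mP : map_poly (in_alg L) (P1 * P2) =
    map_poly (in_alg L) P1 * map_poly (in_alg L) P2 by exact: rmorphM.
  rewrite mP dvdp_mull // mapP2.
  apply/dvdpP; exists ('X^(p.+1) + (1 + (tau%:A - h))%:P).
  have E1 : h%:P * (tau%:A)%:P - h%:P ^+ 2 = 1 :> {poly L}.
    rewrite -polyCM -polyC_exp -polyCB -polyC1; congr (_%:P).
    by apply/eqP; rewrite -subr_eq0 -oppr_eq0 -Eh; apply/eqP; ring.
  rewrite /G2 -[X in _ + X = _]E1 !polyCD ?polyCB ?polyCN polyC1; ring.
rewrite rootE !hornerE /= in Hs.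
pose q := #|F|.
have hq : q = (p ^ 2)%N := hF.
have q0 : (0 < q)%N by rewrite hq expn_gt0 prime_gt0.
have chL : p \in [pchar L] by rewrite (pchar_lalg L) (card_finPcharP hF hp).
have frE a : a ^+ q = pFrobenius_aut chL (pFrobenius_aut chL a).
  by rewrite !pFrobenius_autE -exprM /q hF expnS expn1.
have frD (a b : L) : (a + b) ^+ q = a ^+ q + b ^+ q by rewrite !frE !rmorphD.
have frN (a : L) : (- a) ^+ q = - a ^+ q by rewrite !frE !rmorphN.
have frA c : (c%:A : L) ^+ q = c%:A.
  by rewrite -in_algE -rmorphXn expf_card.
have Ferm1 y : (y \in (1%VS : {vspace L})) = (y ^+ q == y).
  by have := Fermat's_little_theorem (1%AS : {subfield L}) y; rewrite dimv1 expn1.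
have inF y : y \in (1%VS : {vspace L}) -> exists c : F, y = c%:A.
  by case/vlineP => c ->; exists c.
have h0 : h != 0.
  apply/negP => /eqP h0; move/eqP: Eh; rewrite h0 expr0n mulr0 subr0 add0r.
  by rewrite oner_eq0.
have hnF : h \notin (1%VS : {vspace L}).
  apply/negP => /inF [c hc]; move/eqP: (wnr c); apply.
  apply: (@fmorph_inj _ _ (in_alg L)); rewrite rmorph0 -[RHS]Eh hc.
  by rewrite rmorphD rmorphB !rmorphM rmorph1 expr2.
have Hq : (h ^+ q) ^+ 2 - tau%:A * h ^+ q + 1 = 0.
  have := congr1 (fun y => y ^+ q) Eh; rewrite /= expr0n (gtn_eqF q0).
  by rewrite !frD frN [(tau%:A * h) ^+ q]exprMn frA expr1n exprAC => ->.
have hqE : h ^+ q = tau%:A - h.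
  have : (h ^+ q - h) * (h ^+ q - (tau%:A - h)) = 0.
    rewrite -[RHS](subrr 0); rewrite -{1}Hq -Eh; ring.
  move/eqP; rewrite mulf_eq0 !subr_eq0 => /orP[/eqP E|/eqP //].
  by move: hnF; rewrite Ferm1 E eqxx.
have hqh : h ^+ q * h = 1.
  rewrite hqE; apply/eqP; rewrite -subr_eq0 -oppr_eq0 -Eh; apply/eqP; ring.
have xq2 : x ^+ (q * q) = x.
  by rewrite hq arith1 exprD expr1 exprM -/h exprM exprS -hq [h * _]mulrC hqh expr1n mulr1.
have xnF : x ^+ q != x.
  rewrite -Ferm1; apply: contra hnF => /inF [c xc].
  by rewrite /h xc -in_algE -rmorphXn; apply/vlineP; exists (c ^+ p.+1).
pose e := - (1 + h).
have Es : s ^+ p.+1 = e.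
  by apply/eqP; rewrite /e -addr_eq0 addrA Hs.
have e0 : e != 0.
  apply: contra hnF; rewrite /e oppr_eq0 addrC addr_eq0 => /eqP ->.
  by apply/vlineP; exists (-1); rewrite scaleN1r.
have s0 : s != 0.
  by apply: contraNneq e0 => s0; rewrite -Es s0 expr0n.
have eqe : e ^+ q * e = w%:A.
  rewrite /e frN frD expr1n hqE.
  have -> : w%:A = tau%:A + 2%:R :> L.
    have -> : tau%:A = in_alg L (w - 2%:R) by [].
    by rewrite rmorphB rmorph_nat subrK.
  apply/eqP; rewrite -subr_eq0 -oppr_eq0 -Eh; apply/eqP; ring.
pose zeta : L := (w ^+ p.-1)%:A.
have sq2 : s ^+ (q * q) = zeta * s.
  rewrite hq arith1 exprD expr1 exprM Es exprM exprS -hq [e * _]mulrC eqe mulrC.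
  by rewrite /zeta -[in RHS]in_algE rmorphXn.
have frA2 (c : F) : (c%:A : L) ^+ (q * q) = c%:A by rewrite exprM !frA.
have xit j : x ^+ ((q * q) ^ j) = x.
  elim: j => [|j IH]; first by rewrite expn0 expr1.
  by rewrite expnSr exprM IH xq2.
have sit j : s ^+ ((q * q) ^ j) = zeta ^+ j * s.
  elim: j => [|j IH]; first by rewrite expn0 expr1 expr0 mul1r.
  rewrite expnSr exprM IH exprMn sq2 /zeta -in_algE -rmorphXn in_algE frA2.
  by rewrite exprSr -in_algE rmorphXn mulrA.
pose t : 'I_3 -> L := fun i => nth 0 [:: s; 1; x] i.
pose rs0 := coord_ratios t.
have t1 : t (lift ord0 ord0) = 1 by [].
have mem_rs i : t i / t (lift ord0 ord0) \in rs0.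
  apply: allpairs_f; first exact: mem_enum.
  by rewrite mem_filter t1 oner_eq0 mem_enum.
have s_rs : s \in rs0 by have := mem_rs ord0; rewrite t1 divr1.
have x_rs : x \in rs0 by have := mem_rs ord_max; rewrite t1 divr1.
pose E : {subfield L} := <<1 & rs0>>%AS.
have sE : s \in E by apply: seqv_sub_adjoin.
have xE : x \in E by apply: seqv_sub_adjoin.
pose d := \dim E.
have dlow : (2 * p.+1 %| d)%N.
  have := Fermat's_little_theorem E s; rewrite sE /= => /esym/eqP sd.
  have := Fermat's_little_theorem E x; rewrite xE /= => /esym/eqP xd.
  rewrite -/d -(odd_double_half d) in sd xd *.
  rewrite expnD -mul2n expnM -/q (_ : q ^ 2 = q * q)%N in sd xd; last by rewrite expnS expn1.
  case: (odd d) sd xd => /= sd xd.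
    by exfalso; move: xnF; rewrite -{2}xd expn1 exprM exprAC xit eqxx.
  move: sd; rewrite expn0 mul1n sit -{2}[s]mul1r => /(mulIf s0) Hz.
  have : in_alg L ((w ^+ p.-1) ^+ d./2) = in_alg L 1 by rewrite rmorphXn rmorph1.
  by move/fmorph_inj/word; rewrite add0n -mul2n dvdn_pmul2l.
pose n := (2 * p.+1)%N.
have qn : (q ^ n = (q * q) ^ p.+1)%N by rewrite /n expnM [(q ^ 2)%N]expnS expn1.
have w1 : w ^+ q.-1 = 1.
  by apply/(mulfI w0); rewrite -exprS prednK // expf_card mulr1.
have tn i : t i ^+ (q ^ n) = t i.
  rewrite qn; case: i => [[|[|[|//]]] ?] /=.
  - rewrite /t /= sit -[s in RHS]mul1r; congr (_ * _).
    rewrite /zeta -in_algE -rmorphXn -exprM -arith2 -hq.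
    by rewrite -[w ^+ _]/(w ^+ q.-1) w1 rmorph1.
  - by rewrite /t /= expr1n.
  - by rewrite /t /= xit.
have rsn z : z \in rs0 -> z ^+ (q ^ n) = z.
  by case/allpairsP => [[i j] [_ _ ->]]; rewrite exprMn exprVn !tn.
have [alpha Hgen Halpha] := finField_galois_generator (sub1v E).
have alphak k z : z \in E -> (alpha ^+ k)%g z = z ^+ (q ^ k).
  move=> zE; elim: k => [|k IH]; first by rewrite expg0 gal_id expn0 expr1.
  rewrite expgSr galM // IH Halpha ?rpredX // dimv1 expn1.
  by rewrite -exprM -expnSr.
pose M := fixedField_aspace [set (alpha ^+ n)%g].
have sEM : (E <= M)%VS.
  apply/Fadjoin_seqP; split; first exact: sub1v.
  move=> z zrs; have zE : z \in E by apply: seqv_sub_adjoin.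
  apply/fixedFieldP => // g /set1P ->.
  by rewrite alphak // rsn.
have an1 : (alpha ^+ n == 1)%g.
  apply/gal_eqP => z zE; rewrite gal_id.
  by have /mem_fixedFieldP[_ ] := subvP sEM z zE; apply; rewrite set11.
have dup : (d %| n)%N.
  have : #[alpha]%g = d.
    rewrite orderE -(eqP Hgen) -galois_dim ?finField_galois ?sub1v //.
    by rewrite dimv1 divn1.
  by move=> <-; rewrite order_dvdn.
have dn : d = n by apply/eqP; rewrite eqn_dvd dup dlow.
have [TF hT] : exists TF : F, x + x ^+ q = TF%:A.
  apply: inF; rewrite Ferm1 frD -exprM xq2 addrC //.
have [NF hN] : exists NF : F, x * x ^+ q = NF%:A.
  apply: inF; rewrite Ferm1 exprMn -exprM xq2 mulrC //.
pose c : 'M[F]_3 := \matrix_(i, j)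
  (if ((i : nat) == 1%N) && ((j : nat) == 1%N) then NF
   else if ((i : nat) == 1%N) && ((j : nat) == 2%N) then - TF
   else if ((i : nat) == 2%N) && ((j : nat) == 2%N) then 1 else 0).
exists L, c, t; split.
- by exists ord_max, ord_max; split => //; rewrite mxE /= oner_eq0.
- by exists (lift ord0 ord0); rewrite t1 oner_eq0.
- rewrite /on_fermat !big_ord_recl big_ord0 /= /t /= Es expr1n addr0 -/h /e.
  by rewrite addNr.
- rewrite /on_conic; under eq_bigr do rewrite big_mkcond.
  rewrite !big_ord_recl !big_ord0 /= !mxE /= /t /=.
  rewrite !scale0r !mul0r !(add0r, addr0) !mulr1 scaleNr scale1r -hN -hT.
  ring.
- by rewrite /ratio_field_degree; exact: dn.
Qed.
End M.

Theorem proposition7p3 (p : nat) (hp : prime p)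
    (F : finFieldType) (hF : #|F| = (p ^ 2)%N) :
  exists (L : fieldExtType F) (c : 'M[F]_3) (t : 'I_3 -> L),
    [/\ nonzero_qform c, nonzero_coords t, on_fermat p t, on_conic c t
      & ratio_field_degree t = (2 * p.+1)%N].
Proof.
have [w [w0 word wnr]] := exists_w hp hF.
exact: (main hp hF w0 word wnr).
Qed.
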